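(* Let $\mathbb{A}$ be a non-empty set. A word $x\in\mathbb{A}^\omega$ is ultimately periodic if and only if for every finite coloring $\varphi:\mathbb{A}^+\to C$ there exists a suffix of $x$ which admits a shift invariant $\varphi$-monochromatic factorization.
   Context: $x$ is ultimately periodic if $x=uv^\omega$ for some finite words $u$ and non-empty $v$. $T$ is the shift, $T(x_0x_1\cdots)=x_1x_2\cdots$. A factorization $z=V_0V_1V_2\cdots$ with all $V_i\in\mathbb{A}^+$ is $\varphi$-monochromatic if there is $c\in C$ with $\varphi(V_i)=c$ for all $i$. It is shift invariant if for every positive integer $j$, the induced factorization $T^j(z)=W_0W_1W_2\cdots$ with $|W_i|=|V_i|$ for all $i$ is also $\varphi$-monochromatic (the color may depend on $j$). *)

(* Defs.v *)
From mathcomp Require Import all_boot.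
Set Implicit Arguments. Unset Strict Implicit. Unset Printing Implicit Defensive.

(* The infinite word u v^omega, where v = a :: w is non-empty. *)
Definition omega_word (A : Type) (u : seq A) (a : A) (w : seq A) : nat -> A :=
  fun n => if n < size u then nth a u n
           else nth a (a :: w) ((n - size u) %% (size w).+1).

Definition ultimately_periodic (A : Type) (x : nat -> A) : Prop :=
  exists (u : seq A) (a : A) (w : seq A), forall n, x n = omega_word u a w n.

Definition shift (A : Type) (j : nat) (z : nat -> A) : nat -> A :=
  fun n => z (j + n).

(* A factorization z = V_0 V_1 V_2 ... is encoded by the lengths l i = |V_i|. *)
Definition fstart (l : nat -> nat) (i : nat) : nat := \sum_(j < i) l j.

Definition factor (A : Type) (z : nat -> A) (l : nat -> nat) (i : nat) : seq A :=
  mkseq (fun k => z (fstart l i + k)) (l i).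

Definition valid_lengths (l : nat -> nat) : Prop := forall i, 0 < l i.

Definition monochromatic (A : Type) (C : Type) (phi : seq A -> C)
  (z : nat -> A) (l : nat -> nat) : Prop :=
  exists c : C, forall i, phi (factor z l i) = c.

Definition shift_invariant_monochromatic (A : Type) (C : Type)
  (phi : seq A -> C) (z : nat -> A) (l : nat -> nat) : Prop :=
  valid_lengths l /\ monochromatic phi z l /\
  (forall j, 0 < j -> monochromatic phi (shift j z) l).

(* Main.v *)
Require Import Defs.
From Stdlib Require Import Classical ClassicalEpsilon.
From mathcomp Require Import all_boot.
From mathcomp Require Import zify.

Section Aux.
Variable A : Type.

Definition eqA (a b : A) : bool :=
  if excluded_middle_informative (a = b) then true else false.

Lemma eqAP a b : reflect (a = b) (eqA a b).
Proof. rewrite /eqA; case: excluded_middle_informative => h; by constructor. Qed.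

Lemma eqA_refl a : eqA a a.
Proof. exact/eqAP. Qed.

Lemma fstart_const p i : fstart (fun _ => p) i = i * p.
Proof. by rewrite /fstart big_const_ord iter_addn_0 mulnC. Qed.

Lemma per_mono (C : Type) (phi : seq A -> C) (z : nat -> A) p :
  (forall n, z (n + p) = z n) -> monochromatic phi z (fun _ => p).
Proof.
move=> hz; exists (phi (factor z (fun _ => p) 0)) => i.
congr phi; rewrite /factor !fstart_const mul0n; apply: eq_mkseq => t /=.
elim: i => [|i IH] //.
by rewrite mulSn -addnA [p + _]addnC hz.
Qed.

Lemma fwd (x : nat -> A) : ultimately_periodic x ->
  forall (C : finType) (phi : seq A -> C),
     exists (k : nat) (l : nat -> nat),
       shift_invariant_monochromatic phi (shift k x) l.
Proof.
move=> [u [a [w hx]]] C phi; exists (size u), (fun _ => (size w).+1).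
have hz : forall j n, shift j (shift (size u) x) (n + (size w).+1)
                     = shift j (shift (size u) x) n.
  move=> j n; rewrite /shift !hx /omega_word.
  by rewrite !ltnNge !leq_addr /= !addKn addnA modnDr.
split; first by [].
split; last by move=> j _; exact: per_mono (hz j).
apply: per_mono => n; have := hz 0 n; by rewrite /shift !add0n.
Qed.

Lemma head_factor (a0 : A) z l i : 0 < l i -> head a0 (factor z l i) = z (fstart l i).
Proof. rewrite /factor; case: (l i) => // n _ /=. by rewrite addn0. Qed.

Lemma core (C : Type) (g : A -> C) a0 x k l :
  shift_invariant_monochromatic (fun w => g (head a0 w)) (shift k x) l ->
  0 < l 0 /\ forall j, g (x (k + j)) = g (x (k + j + l 0)).
Proof.
move=> [hl [hm hs]]; split; first exact: hl.
have key : forall j, monochromatic (fun w => g (head a0 w)) (shift j (shift k x)) l.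
  move=> [|j]; last by apply: hs.
  case: hm => c hc; exists c => i; rewrite -(hc i); congr g.
move=> j; case: (key j) => c hc.
have h0 := hc 0; have h1 := hc 1.
rewrite !head_factor // in h0 h1.
rewrite /fstart big_ord0 in h0; rewrite /fstart big_ord1 in h1.
rewrite /shift addn0 in h0; rewrite /shift in h1.
by rewrite h0 -h1 addnA.
Qed.

Lemma per_up (x : nat -> A) k p : 0 < p -> (forall j, x (k + j + p) = x (k + j)) ->
  ultimately_periodic x.
Proof.
move=> p0 hp.
have hm : forall m, x (k + m) = x (k + m %% p).
  move=> m; rewrite {1}(divn_eq m p); elim: (m %/ p) => [|d IH].
    by rewrite mul0n add0n.
  have -> : k + (d.+1 * p + m %% p) = k + (d * p + m %% p) + p by rewrite mulSn; lia.
  by rewrite hp.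
exists (mkseq x k), (x k), (mkseq (fun i => x (k + i.+1)) p.-1) => n.
rewrite /omega_word !size_mkseq prednK //.
case: ltnP => hn; first by rewrite nth_mkseq.
have hr : (n - k) %% p < p by rewrite ltn_mod.
have -> : nth (x k) (x k :: mkseq (fun i => x (k + i.+1)) p.-1) ((n - k) %% p)
          = x (k + (n - k) %% p).
  move: hr; case: ((n - k) %% p) => [|r] hr /=; first by rewrite addn0.
  by rewrite nth_mkseq // -ltnS prednK.
by rewrite -hm subnKC.
Qed.

Lemma fin_case (a0 : A) (x : nat -> A) (L : seq A) :
  (forall n, has (eqA (x n)) L) ->
  (forall (C : finType) (phi : seq A -> C),
     exists (k : nat) (l : nat -> nat),
       shift_invariant_monochromatic phi (shift k x) l) ->
  ultimately_periodic x.
Proof.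
move=> hL H.
pose idx a := find (eqA a) L.
have hidx : forall n, x n = nth a0 L (idx (x n)).
  move=> n; apply/eqAP; exact: nth_find (hL n).
have [k [l hkl]] := H 'I_(size L).+1
   (fun w => (inord (idx (head a0 w)) : 'I_(size L).+1)).
have [p0 hp] := core _ (fun a => (inord (idx a) : 'I_(size L).+1)) a0 x k l hkl.
apply: (per_up x k (l 0)) => // j.
rewrite hidx [in RHS]hidx; congr (nth a0 L).
have e := congr1 val (hp j); rewrite /= !inordK ?ltnS ?find_size // in e.
Qed.

Section Inf.
Variable x : nat -> A.

Definition newp n := all (fun i => ~~ eqA (x i) (x n)) (iota 0 n).
Definition rank n := count newp (iota 0 n).

Lemma rankS n : rank n.+1 = rank n + newp n.
Proof. by rewrite /rank -addn1 iotaD count_cat add0n /= addn0. Qed.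

Lemma rank_le n : rank n <= n.
Proof. by rewrite /rank -{2}(size_iota 0 n) count_size. Qed.

Lemma rank_mono n d : rank n <= rank (n + d).
Proof.
elim: d => [|d IH]; first by rewrite addn0.
by rewrite addnS rankS; exact: leq_trans IH (leq_addr _ _).
Qed.

Lemma newp0 : newp 0. Proof. by []. Qed.

Definition fo m := ex_minn (P := fun i => eqA (x i) (x m)) (ex_intro _ m (eqA_refl (x m))).

Lemma fo_spec m : [/\ fo m <= m, x (fo m) = x m & forall i, eqA (x i) (x m) -> fo m <= i].
Proof.
rewrite /fo; case: ex_minnP => n hn hmin; split => //.
  exact: hmin (eqA_refl _).
exact/eqAP.
Qed.

Lemma fo_le m : fo m <= m. Proof. by case: (fo_spec m). Qed.

Lemma fo_eq m m' : x m = x m' -> fo m = fo m'.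
Proof. move=> e; rewrite /fo; apply: eq_ex_minn => i; by rewrite e. Qed.

Lemma fo_new n : newp n -> fo n = n.
Proof.
move=> hn; case: (fo_spec n) => h1 h2 _.
apply/eqP; rewrite eqn_leq h1 /= leqNgt; apply/negP => lt.
have: fo n \in iota 0 n by rewrite mem_iota leq0n add0n lt.
move/allP: hn => hn /hn.
by rewrite h2 eqA_refl.
Qed.

Definition q n := (logn 2 (rank n)).+1.

Fixpoint colf f n := match f with
  | 0 => false
  | f'.+1 => if 0 < n then ~~ colf f' (fo (n - q n)) else false
  end.

Lemma colf_stable f f' n : n < f -> n < f' -> colf f n = colf f' n.
Proof.
elim: f f' n => [|f IH] [|f'] n // h h' /=.
case: ifP => // n0; congr negb; apply: IH.
  have := fo_le (n - q n); rewrite /q; lia.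
have := fo_le (n - q n); rewrite /q; lia.
Qed.

Definition col n := colf n.+1 n.

Lemma colE n : 0 < n -> col n = ~~ col (fo (n - q n)).
Proof.
move=> n0; rewrite {1}/col [colf n.+1 n]/= n0; congr negb; apply: colf_stable.
  have := fo_le (n - q n); rewrite /q; lia.
done.
Qed.

Definition psi (a : A) : bool := col (fo (epsilon (inhabits 0) (fun m => x m = a))).

Lemma psiE m : psi (x m) = col (fo m).
Proof.
rewrite /psi; congr col; apply: fo_eq.
apply: (epsilon_spec (inhabits 0) (fun m' => x m' = x m)); by exists m.
Qed.

Hypothesis hinf : forall N, exists n, N <= n /\ newp n.

Lemma rank_unb r : exists n, r < rank n.
Proof.
elim: r => [|r [n hn]]; first by exists 1; rewrite rankS newp0.
have [m [hm hnew]] := hinf n.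
exists m.+1; rewrite rankS hnew addn1 ltnS.
apply: leq_trans hn _; rewrite -(subnKC hm); exact: rank_mono.
Qed.

Lemma rank_hit r : exists n, newp n /\ rank n = r.
Proof.
have ex : exists n, r < rank n.+1.
  have [n hn] := rank_unb r; exists n; rewrite rankS; exact: leq_trans hn (leq_addr _ _).
case: (ex_minnP ex) => n hn hmin.
have hle : rank n <= r.
  move: hn hmin; case: n => [|n] hn hmin; first by rewrite /rank.
  rewrite leqNgt; apply/negP => /hmin; by rewrite ltnn.
move: hn; rewrite rankS; case hnw: (newp n) => /=.
  rewrite addn1 ltnS => h; exists n; split => //.
  by apply/eqP; rewrite eqn_leq hle h.
rewrite addn0 => h; by move: (leq_trans h hle); rewrite ltnn.
Qed.

Lemma inf_contra k p : 0 < p -> ~ (forall j, psi (x (k + j)) = psi (x (k + j + p))).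
Proof.
move=> p0 hp.
pose r := 2 ^ p.-1 * (2 * (k + p)).+1.
have hr : logn 2 r = p.-1.
  rewrite /r lognM ?expn_gt0 // pfactorK //.
  have := logn_Gauss 1 (_ : coprime 2 (2 * (k + p)).+1).
  rewrite muln1 => ->; first by rewrite addn0.
  by rewrite coprime2n /= oddM.
have [n [hn hrk]] := rank_hit r.
have hnr : r <= n by rewrite -hrk rank_le.
have hkp : (2 * (k + p)).+1 <= r by rewrite /r leq_pmull // expn_gt0.
have hq : q n = p by rewrite /q hrk hr prednK.
have n0 : 0 < n by lia.
have := hp (n - p - k).
have -> : k + (n - p - k) = n - p by lia.
have -> : n - p + p = n by lia.
rewrite !psiE (fo_new n hn) (colE n n0) hq.
by case: (col _).
Qed.

End Inf.

End Aux.

Theorem proposition3p3 (A : Type) (a0 : A) (x : nat -> A) :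
  ultimately_periodic x <->
  (forall (C : finType) (phi : seq A -> C),
     exists (k : nat) (l : nat -> nat),
       shift_invariant_monochromatic phi (shift k x) l).
Proof.
split; first exact: fwd.
move=> H.
case: (classic (exists L, forall n, has (@eqA A (x n)) (L : seq A))) => [[L hL] | hnot].
  exact: fin_case A a0 x L hL H.
exfalso.
have hinf : forall N, exists n, N <= n /\ newp A x n.
  move=> N; apply: NNPP => hno; apply: hnot; exists (mkseq x N) => n.
  elim/ltn_ind: n => n IH.
  case: (ltnP n N) => hnN.
    rewrite /mkseq has_map; apply/hasP; exists n; first by rewrite mem_iota add0n hnN.
    exact: eqA_refl.
  have nn : ~~ newp A x n.
    apply/negP => hw; apply: hno; by exists n.
  move: nn; rewrite /newp -has_predC => /hasP [i hi] /negbNE e.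
  move: hi; rewrite mem_iota add0n => /andP [_ hi].
  have := IH i hi; by move/eqAP: e => ->.
have [k [l hkl]] := H bool (fun w => psi A x (head a0 w)).
have [p0 hp] := core A _ _ _ _ _ _ hkl.
exact: inf_contra A x hinf _ _ p0 hp.
Qed.
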